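(* Let $G$ be a group containing a normal torsion-free abelian subgroup $A$ of finite index. If $G$ has no proper contranormal subgroups, then $G$ is nilpotent.
   Context: A subgroup $H$ of $G$ is contranormal in $G$ if its normal closure $H^G$ equals $G$; it is proper if $H\ne G$. *)

(* Defs.v *)
(* abstract (possibly infinite) groups, since MathComp's
   fingroup only handles finite groups. *)
From Stdlib Require Import List.

Record Group := {
  carrier :> Type;
  gmul : carrier -> carrier -> carrier;
  ginv : carrier -> carrier;
  gone : carrier;
  gmul_assoc : forall x y z, gmul x (gmul y z) = gmul (gmul x y) z;
  gmul_1l : forall x, gmul gone x = x;
  gmul_1r : forall x, gmul x gone = x;
  gmul_Vl : forall x, gmul (ginv x) x = gone;
  gmul_Vr : forall x, gmul x (ginv x) = gone
}.

Section GroupDefs.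
Variable G : Group.
Local Notation "x * y" := (gmul G x y).

Fixpoint gpow (x : G) (n : nat) : G :=
  match n with O => gone G | S k => x * gpow x k end.

Definition is_subgroup (H : G -> Prop) : Prop :=
  H (gone G) /\ (forall x y, H x -> H y -> H (x * y)) /\
  (forall x, H x -> H (ginv G x)).

Definition is_normal (H : G -> Prop) : Prop :=
  is_subgroup H /\ forall g h, H h -> H (ginv G g * h * g).

Definition abelian (H : G -> Prop) : Prop :=
  forall x y, H x -> H y -> x * y = y * x.

Definition torsion_free (H : G -> Prop) : Prop :=
  forall x n, H x -> 0 < n -> gpow x n = gone G -> x = gone G.

Definition finite_index (H : G -> Prop) : Prop :=
  exists l : list G, forall g, exists t, In t l /\ H (ginv G t * g).

Definition gen (S : G -> Prop) : G -> Prop :=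
  fun x => forall K, is_subgroup K -> (forall s, S s -> K s) -> K x.

Definition normal_closure (H : G -> Prop) : G -> Prop :=
  fun x => forall N, is_normal N -> (forall h, H h -> N h) -> N x.

Definition contranormal (H : G -> Prop) : Prop :=
  forall x, normal_closure H x.

Definition proper (H : G -> Prop) : Prop := exists x, ~ H x.

Definition comm (x y : G) : G := ginv G x * ginv G y * x * y.

Fixpoint lcs (n : nat) : G -> Prop :=
  match n with
  | O => fun _ => True
  | S k => gen (fun z => exists x y, lcs k x /\ z = comm x y)
  end.

Definition nilpotent : Prop :=
  exists n, forall x, lcs n x -> x = gone G.

End GroupDefs.

(* Main.v *)
Require Import Defs.
From HB Require Import structures.
From mathcomp Require Import all_boot all_fingroup all_solvable all_algebra.
From mathcomp Require Import boolp.
From mathcomp Require classical_sets.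
From Stdlib Require Import Classical_Prop.
Set Implicit Arguments. Unset Strict Implicit. Unset Printing Implicit Defensive.
Set Warnings "-notation-overridden -redundant-canonical-projection -ambiguous-paths".
Import GRing.Theory.
Local Open Scope group_scope.

Section Infra.
Variable G : Defs.Group.
Definition GT : Type := carrier G.
HB.instance Definition _ := gen_eqMixin GT.
HB.instance Definition _ := gen_choiceMixin GT.
HB.instance Definition _ := isGroup.Build GT (@gmul_assoc G) (@gmul_1l G) (@gmul_1r G) (@gmul_Vl G) (@gmul_Vr G).
End Infra.

Section Basic.
Variable G : Defs.Group.
Local Notation T := (GT G).
Lemma gmulE (x y : T) : gmul G x y = x * y. Proof. by []. Qed.
Lemma ginvE (x : T) : ginv G x = x^-1. Proof. by []. Qed.
Lemma goneE : gone G = 1 :> T. Proof. by []. Qed.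
Lemma gpowE (x : T) n : gpow G x n = x ^+ n.
Proof. elim: n => [|n IH] //=; by rewrite expgS -IH. Qed.
Lemma commE (x y : T) : comm G x y = [~ x, y].
Proof. by rewrite /comm /commg /conjg !mulgA. Qed.

Definition subgrp (H : T -> Prop) :=
  [/\ H 1, forall x y, H x -> H y -> H (x * y) & forall x, H x -> H x^-1].
Definition normalp (H : T -> Prop) := subgrp H /\ forall g h, H h -> H (h ^ g).

Lemma subgrpE (H : T -> Prop) : is_subgroup G H <-> subgrp H.
Proof.
rewrite /subgrp /is_subgroup; split.
  by move=> [h1 [h2 h3]]; split.
by move=> [h1 h2 h3]; split; [|split].
Qed.
Lemma normalpE (H : T -> Prop) : is_normal G H <-> normalp H.
Proof.
split.
  move=> [sH nH]; split; first exact/subgrpE.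
  by move=> g h Hh; rewrite /conjg mulgA; exact: nH.
move=> [sH nH]; split; first exact/subgrpE.
by move=> g h Hh; have := nH g h Hh; rewrite /conjg mulgA.
Qed.
End Basic.

Section Transversal.
Variable G : Defs.Group.
Local Notation T := (GT G).
Variable A : T -> Prop.
Hypothesis nA : normalp A.
Variable l : seq T.
Hypothesis hl : forall g : T, exists t, List.In t l /\ A (t^-1 * g).

Lemma Ain1 : A 1. Proof. by move: nA; rewrite /normalp /subgrp => -[[]]. Qed.
Lemma AinM x y : A x -> A y -> A (x * y). Proof. by move: nA; rewrite /normalp /subgrp => -[[_ h _] _]; apply: h. Qed.
Lemma AinV x : A x -> A x^-1. Proof. by move: nA; rewrite /normalp /subgrp => -[[_ _ h] _]; apply: h. Qed.
Lemma AinJ x g : A x -> A (x ^ g). Proof. by move: nA => -[_]; apply. Qed.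
Lemma AinVE x : A x^-1 -> A x. Proof. by move/AinV; rewrite invgK. Qed.
Lemma AinJE x g : A (x ^ g) -> A x.
Proof. by move/(AinJ g^-1); rewrite conjgK. Qed.

Lemma AinT x y z : A (x^-1 * y) -> A (y^-1 * z) -> A (x^-1 * z).
Proof. by move=> h1 h2; have := AinM h1 h2; rewrite mulgA mulgK. Qed.
Lemma AinS x y : A (x^-1 * y) -> A (y^-1 * x).
Proof. by move/AinV; rewrite invMg invgK. Qed.

Lemma In_nth_seq (t : T) s : List.In t s -> exists2 j, j < size s & nth 1 s j = t.
Proof.
elim: s => //= x s IH [->|/IH [j lt_j <-]]; first by exists 0.
by exists j.+1.
Qed.

Definition cpred (g : T) (j : nat) : bool := `[< j < size l /\ A ((nth 1 l j)^-1 * g) >].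

Lemma cpred_ex g : exists j, cpred g j.
Proof.
have [t [/In_nth_seq [j lt_j <-] Aj]] := hl g.
by exists j; apply/asboolP.
Qed.

Definition ci g := ex_minn (cpred_ex g).

Lemma ciP g : ci g < size l /\ A ((nth 1 l (ci g))^-1 * g).
Proof. by rewrite /ci; case: ex_minnP => j /asboolP. Qed.

Lemma ci_eq g g' : A (g^-1 * g') -> ci g = ci g'.
Proof.
move=> Agg.
have eqP' j : cpred g j = cpred g' j.
  apply/asboolP/asboolP => -[lt_j Aj]; split=> //.
    exact: AinT Aj Agg.
  exact: AinT Aj (AinS Agg).
rewrite /ci; case: ex_minnP => a Pa mina; case: ex_minnP => b Pb minb.
apply/eqP; rewrite eqn_leq mina ?minb //; by rewrite ?eqP' // -eqP'.
Qed.

Definition R : seq nat := [seq j <- iota 0 (size l) | ci (nth 1 l j) == j].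
Definition m := size R.
Definition t (i : nat) : T := nth 1 l (nth 0 R i).
Definition idx (g : T) : nat := index (ci g) R.

Lemma uniqR : uniq R. Proof. by rewrite filter_uniq // iota_uniq. Qed.

Lemma ci_l g : ci (nth 1 l (ci g)) = ci g.
Proof. by apply: ci_eq; have [_ ?] := ciP g. Qed.

Lemma mem_R g : ci g \in R.
Proof. by rewrite mem_filter ci_l eqxx mem_iota add0n (proj1 (ciP g)). Qed.

Lemma idx_lt g : idx g < m.
Proof. by rewrite /idx /m index_mem mem_R. Qed.

Lemma t_idx g : t (idx g) = nth 1 l (ci g).
Proof. by rewrite /t /idx nth_index ?mem_R. Qed.

Lemma idxP g : A ((t (idx g))^-1 * g).
Proof. by rewrite t_idx; case: (ciP g). Qed.

Lemma idx_uniq i g : i < m -> A ((t i)^-1 * g) -> idx g = i.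
Proof.
move=> lt_i Ag.
have inR : nth 0 R i \in R by rewrite mem_nth.
have cij : ci (nth 1 l (nth 0 R i)) = nth 0 R i by move: inR; rewrite mem_filter => /andP[/eqP].
rewrite /idx; have -> : ci g = nth 0 R i by rewrite -(ci_eq Ag) cij.
by rewrite index_uniq // uniqR.
Qed.

Lemma idx_t i : i < m -> idx (t i) = i.
Proof. by move=> lt_i; apply: idx_uniq => //; rewrite mulVg; apply: Ain1. Qed.

Lemma idx_eqP x y : idx x = idx y <-> A (x^-1 * y).
Proof.
split=> [e|Axy].
  have Ax := idxP x; have Ay := idxP y; rewrite e in Ax.
  exact: AinT (AinS Ax) Ay.
symmetry; apply: idx_uniq; first exact: idx_lt.
exact: AinT (idxP x) Axy.
Qed.

Lemma m_gt0 : 0 < m.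
Proof. exact: (leq_ltn_trans (leq0n _) (idx_lt 1)). Qed.

End Transversal.

Lemma fin_nc (gT : finGroupType) (K : {group gT}) :
  (forall H : {group gT}, H \subset K ->
     (forall N : {group gT}, N <| K -> H \subset N -> N :=: K) -> H :=: K) ->
  nilpotent K.
Proof.
move=> hyp.
have sylN p (P : {group gT}) : p.-Sylow(K) P -> P <| K.
  move=> sylP; have sPK := pHall_sub sylP.
  have sPN : P \subset 'N_K(P) by rewrite subsetI sPK normG.
  have eNK : 'N_K(P) :=: K.
    apply: hyp; first exact: subsetIl.
    move=> N nNK sHN; have sNK := normal_sub nNK.
    have sPN' : P \subset N := subset_trans sPN sHN.
    have sylPN : p.-Sylow(N) P := pHall_subl sPN' sNK sylP.
    have := Frattini_arg nNK sylPN => defK.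
    apply/eqP; rewrite eqEsubset sNK /=.
    by rewrite -{1}defK mul_subG.
  by rewrite /normal sPK -eNK subsetIr.
apply: (nilpotentS _ (Fitting_nil K)).
rewrite -{1}(Sylow_gen K) gen_subG; apply/bigcupsP => P /SylowP[p pr_p sylP].
have nPK := sylN p P sylP.
apply: subset_trans (pcore_max (pHall_pgroup sylP) nPK) _.
by rewrite -p_core_Fitting pcore_sub.
Qed.

Section PartF.
Variable G : Defs.Group.
Local Notation T := (GT G).
Variable A : T -> Prop.
Hypothesis nA : normalp A.
Variable l : seq T.
Hypothesis hl : forall g : T, exists t, List.In t l /\ A (t^-1 * g).
Local Notation m := (m hl).
Local Notation t := (t hl).
Local Notation idx := (idx hl).

Definition fo (g : T) (i : 'I_m) : 'I_m := Ordinal (idx_lt nA hl (t i * g)).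

Lemma fo_inj g : injective (fo g).
Proof.
move=> i j /(congr1 val) /= /(idx_eqP nA) h.
apply: ord_inj; rewrite -(idx_t nA (ltn_ord i)) -(idx_t nA (ltn_ord j)) /=.
apply/(idx_eqP nA); apply: (AinJE nA (g := g)).
by move: h; rewrite /conjg !invMg !mulgA.
Qed.

Definition rho g : {perm 'I_m} := perm (@fo_inj g).
Lemma rhoE g i : rho g i = fo g i. Proof. by rewrite permE. Qed.

Lemma rhoM g h : rho (g * h) = rho g * rho h.
Proof.
apply/permP => i; rewrite permM !rhoE; apply: val_inj => /=.
apply/(idx_eqP nA).
set k := idx (t i * g).
have e : (t i * (g * h))^-1 * (t k * h) = ((t i * g)^-1 * t k) ^ h.
  by rewrite /conjg !invMg !mulgA.
rewrite e; apply: AinJ => //; apply: (AinS nA); exact: idxP.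
Qed.

Lemma rho1 : rho 1 = 1.
Proof.
apply/permP => i; rewrite rhoE perm1; apply: val_inj => /=.
by rewrite mulg1 (idx_t nA (ltn_ord i)).
Qed.

Lemma rhoV g : rho g^-1 = (rho g)^-1.
Proof. by apply: (mulgI (rho g)); rewrite -rhoM !mulgV rho1. Qed.

Lemma rhoJ g h : rho (g ^ h) = rho g ^ rho h.
Proof. by rewrite /conjg !rhoM rhoV. Qed.

Lemma rhoC g h : rho [~ g, h] = [~ rho g, rho h].
Proof. by rewrite /commg rhoM rhoV rhoJ. Qed.

Lemma rho_ker g : rho g = 1 <-> A g.
Proof.
have e i : (t i * g)^-1 * t i = g^-1 by rewrite invMg -mulgA mulVg mulg1.
split=> [rg|Ag].
  pose i0 : 'I_m := Ordinal (m_gt0 nA hl).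
  have := congr1 val (congr1 (fun s : {perm 'I_m} => s i0) rg).
  rewrite rhoE perm1 /= -{2}(idx_t nA (m_gt0 nA hl)) => /(idx_eqP nA).
  by rewrite e => /(AinVE nA).
apply/permP => i; rewrite rhoE perm1; apply: val_inj => /=.
rewrite -{2}(idx_t nA (ltn_ord i)); apply/(idx_eqP nA).
by rewrite e; apply: AinV.
Qed.

Definition K : {set {perm 'I_m}} := [set s | `[< exists g, rho g = s >] ].

Lemma memK g : rho g \in K.
Proof. by rewrite inE; apply/asboolP; exists g. Qed.

Lemma K_group : group_set K.
Proof.
apply/group_setP; split; first by rewrite -rho1 memK.
move=> x y; rewrite !inE => /asboolP[g <-] /asboolP[h <-].
by apply/asboolP; exists (g * h); rewrite rhoM.
Qed.

Definition KG := Group K_group.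

Hypothesis hyp : forall H : T -> Prop, Defs.is_subgroup G H -> Defs.proper G H -> ~ Defs.contranormal G H.

Lemma K_nc (H : {group {perm 'I_m}}) : H \subset KG ->
  (forall N : {group {perm 'I_m}}, N <| KG -> H \subset N -> N :=: KG) -> H :=: KG.
Proof.
move=> sHK ncH.
pose H' g := rho g \in H.
have sH' : subgrp H'.
  split; rewrite /H'.
  - by rewrite rho1 group1.
  - by move=> x y hx hy; rewrite rhoM groupM.
  - by move=> x hx; rewrite rhoV groupV.
have AH' a : A a -> H' a by move/rho_ker => ra; rewrite /H' ra group1.
have allH : forall x, H' x.
  move=> x; apply: NNPP => nHx.
  apply: (hyp (proj2 (subgrpE H') sH') (ex_intro _ x nHx)).
  move=> y N /normalpE nN HN.
  have [[N1 NM NV] NJ] := nN.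
  pose N0 : {set {perm 'I_m}} := [set s | `[< exists n : T, N n /\ rho n = s >] ].
  have N0g : group_set N0.
    apply/group_setP; split; first by rewrite inE; apply/asboolP; exists 1; rewrite rho1.
    move=> u v; rewrite !inE => /asboolP[g [Ng <-]] /asboolP[h [Nh <-]].
    by apply/asboolP; exists (g * h); rewrite rhoM; split => //; apply: NM.
  pose N0G := Group N0g.
  have nN0 : N0G <| KG.
    rewrite /normal; apply/andP; split.
      apply/subsetP => s; rewrite inE => /asboolP[n [_ <-]]; exact: memK.
    apply/subsetP => k; rewrite inE => /asboolP[g <-]; rewrite inE.
    apply/subsetP => s; rewrite mem_conjg inE => /asboolP[n [Nn e]].
    rewrite /N0G /= inE; apply/asboolP; exists (n ^ g); split; first exact: NJ.
    by rewrite rhoJ e conjgKV.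
  have sHN0 : H \subset N0G.
    apply/subsetP => s Hs; have := subsetP sHK s Hs; rewrite inE => /asboolP[g eg].
    rewrite /N0G /= inE; apply/asboolP; exists g; split => //; by apply: HN; rewrite /H' eg.
  have eN0 := ncH N0G nN0 sHN0.
  have : rho y \in N0G by rewrite eN0 memK.
  rewrite inE => /asboolP[n [Nn e]].
  have : A (n^-1 * y) by apply/rho_ker; rewrite rhoM rhoV e mulVg.
  move/AH'/HN => Nny.
  by have := NM _ _ Nn Nny; rewrite mulKVg.
apply/eqP; rewrite eqEsubset sHK /=.
apply/subsetP => s; rewrite inE => /asboolP[g <-]; exact: allH.
Qed.

Lemma KG_nil : nilpotent KG.
Proof. exact: fin_nc K_nc. Qed.

Lemma lcs_rho j x : lcs G j x -> rho x \in 'L_j.+1(KG).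
Proof.
elim: j x => [|j IH] x /=.
  by rewrite lcn1 memK.
move=> gx; apply: (gx (fun g : T => rho g \in 'L_j.+2(KG))).
  apply/subgrpE; split.
  - by rewrite rho1 group1.
  - by move=> u v hu hv; rewrite rhoM groupM.
  - by move=> u hu; rewrite rhoV groupV.
move=> s [u [v [lu ->]]].
rewrite commE rhoC lcnSn; apply: mem_commg; first exact: IH.
exact: memK.
Qed.

Lemma partF : exists n, forall x, lcs G n x -> A x.
Proof.
have [n Ln] := lcnP _ KG_nil.
exists n => x /lcs_rho; rewrite Ln inE => /eqP /rho_ker //.
Qed.

End PartF.

Section PartIa.
Local Open Scope ring_scope.
Variable G : Defs.Group.
Local Notation T := (GT G).
Variable A : T -> Prop.
Hypothesis nA : normalp A.
Hypothesis abA : forall x y : T, A x -> A y -> (x * y = y * x)%g.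
Variable l : seq T.
Hypothesis hl : forall g : T, exists t, List.In t l /\ A (t^-1 * g)%g.
Local Notation m := (m hl).
Local Notation t := (t hl).
Local Notation idx := (idx hl).

Definition AT := {x : T | `[< A x >]}.
HB.instance Definition _ := [Choice of AT by <:].

Lemma valA (x : AT) : A (val x). Proof. exact/asboolP/(valP x). Qed.
Definition inA (x : T) (Ax : A x) : AT := exist _ x (introT (asboolP (A x)) Ax).
Lemma inAE x (Ax : A x) : val (inA Ax) = x. Proof. by []. Qed.

Definition azero : AT := inA (Ain1 nA).
Definition aadd (x y : AT) : AT := inA (AinM nA (valA x) (valA y)).
Definition aopp (x : AT) : AT := inA (AinV nA (valA x)).

Lemma aaddA : associative aadd.
Proof. by move=> x y z; apply: val_inj; rewrite /= mulgA. Qed.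
Lemma aaddC : commutative aadd.
Proof. by move=> x y; apply: val_inj; rewrite /= abA //; apply: valA. Qed.
Lemma aadd0 : left_id azero aadd.
Proof. by move=> x; apply: val_inj; rewrite /= mul1g. Qed.
Lemma aaddN : left_inverse azero aopp aadd.
Proof. by move=> x; apply: val_inj; rewrite /= mulVg. Qed.

HB.instance Definition _ := GRing.isZmodule.Build AT aaddA aaddC aadd0 aaddN.

Lemma valD (x y : AT) : val (x + y) = (val x * val y)%g. Proof. by []. Qed.
Lemma valN (x : AT) : val (- x) = (val x)^-1%g. Proof. by []. Qed.
Lemma val0 : val (0 : AT) = 1%g. Proof. by []. Qed.
Lemma valMn (x : AT) n : val (x *+ n) = (val x ^+ n)%g.
Proof. by elim: n => [|n IH] //; rewrite mulrS valD IH expgS. Qed.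
Lemma valB (x y : AT) : val (x - y) = (val x * (val y)^-1)%g. Proof. by []. Qed.

Definition cj (g : T) (x : AT) : AT := inA (AinJ nA g (valA x)).
Lemma cjE g x : val (cj g x) = (val x ^ g)%g. Proof. by []. Qed.
Lemma cjB g : zmod_morphism (cj g).
Proof. by move=> x y; apply: val_inj; rewrite /= conjMg conjVg. Qed.
HB.instance Definition _ (g : T) := GRing.isZmodMorphism.Build AT AT (cj g) (cjB g).
Lemma cjD g x y : cj g (x + y) = cj g x + cj g y. Proof. exact: raddfD. Qed.
Lemma cjN g x : cj g (- x) = - cj g x. Proof. exact: raddfN. Qed.
Lemma cj0 g : cj g 0 = 0. Proof. exact: raddf0. Qed.
Lemma cjMn g x n : cj g (x *+ n) = cj g x *+ n. Proof. exact: raddfMn. Qed.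
Lemma cjBE g x y : cj g (x - y) = cj g x - cj g y. Proof. exact: raddfB. Qed.
Lemma cj_sum g (F : 'I_m -> AT) : cj g (\sum_(i < m) F i) = \sum_(i < m) cj g (F i).
Proof. exact: raddf_sum. Qed.

Lemma cjM g h x : cj (g * h)%g x = cj h (cj g x).
Proof. by apply: val_inj; rewrite /= conjgM. Qed.
Lemma cj1 x : cj 1%g x = x.
Proof. by apply: val_inj; rewrite /= conjg1. Qed.
Lemma cjK g x : cj g^-1%g (cj g x) = x.
Proof. by apply: val_inj; rewrite /= conjgK. Qed.
Lemma cjKV g x : cj g (cj g^-1%g x) = x.
Proof. by apply: val_inj; rewrite /= conjgKV. Qed.

Lemma cjA (e : T) x : A e -> cj e x = x.
Proof.
by move=> Ae; apply: val_inj; rewrite /= /conjg (abA (valA x) Ae) mulKg.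
Qed.

Lemma cj_idx (y : T) x : cj y x = cj (t (idx y)) x.
Proof.
have e : y = (t (idx y) * ((t (idx y))^-1 * y))%g by rewrite mulKVg.
by rewrite {1}e cjM cjA //; apply: idxP.
Qed.

Definition lo (g : T) (i : 'I_m) : 'I_m := Ordinal (idx_lt nA hl (g * t i)%g).
Lemma lo_inj g : injective (lo g).
Proof.
move=> i j /(congr1 val) /= /(idx_eqP nA) h.
apply: ord_inj; rewrite -(idx_t nA (ltn_ord i)) -(idx_t nA (ltn_ord j)) /=.
by apply/(idx_eqP nA); move: h; rewrite invMg -mulgA mulKg.
Qed.

Definition tau (x : AT) : AT := \sum_(i < m) cj (t i) x.

Lemma tauB : zmod_morphism tau.
Proof. by move=> x y; rewrite /tau -sumrB; apply: eq_bigr => i _; rewrite raddfB. Qed.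
HB.instance Definition _ := GRing.isZmodMorphism.Build AT AT tau tauB.
Lemma tauMn x n : tau (x *+ n) = tau x *+ n. Proof. exact: raddfMn. Qed.
Lemma tauBE x y : tau (x - y) = tau x - tau y. Proof. exact: raddfB. Qed.

Lemma tau_cj g x : tau (cj g x) = tau x.
Proof.
rewrite /tau [RHS](reindex_inj (@lo_inj g)) /=; apply: eq_bigr => i _.
by rewrite -cjM cj_idx.
Qed.

Lemma cj_tau g x : cj g (tau x) = tau x.
Proof.
rewrite /tau raddf_sum [RHS](reindex_inj (@fo_inj _ _ nA _ hl g)) /=; apply: eq_bigr => i _.
by rewrite -cjM cj_idx.
Qed.

Definition Cc (x : AT) := forall g, cj g x = x.

Lemma tauC x : Cc x -> tau x = x *+ m.
Proof. by move=> Cx; rewrite /tau (eq_bigr (fun _ => x)) ?sumr_const ?card_ord. Qed.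

Lemma mulm_tau x : x *+ m = tau x + \sum_(i < m) (x - cj (t i) x).
Proof. by rewrite sumrB sumr_const card_ord addrC subrK. Qed.

Lemma dA g (i : 'I_m) : A (g * t i * (t (lo g i))^-1)%g.
Proof.
have h := idxP nA hl (g * t i)%g.
have := AinJ nA (t (lo g i))^-1%g h.
by rewrite /conjg invgK /= !mulgA mulgV mul1g.
Qed.
Definition d g i : AT := inA (dA g i).
Definition W g : AT := \sum_(i < m) d g i.

Lemma W_A (a : AT) : W (val a) = a *+ m.
Proof.
rewrite /W (eq_bigr (fun _ => a)) ?sumr_const ?card_ord // => i _.
apply: val_inj => /=.
have -> : idx (val a * t i)%g = i.
  apply: (idx_uniq nA (ltn_ord i)); rewrite mulgA.
  by have := AinJ nA (t i) (valA a); rewrite /conjg mulgA.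
by rewrite mulgK.
Qed.

Lemma W1 : W 1%g = 0.
Proof. by have := W_A 0; rewrite mul0rn. Qed.

Lemma dM g h (i : 'I_m) : d (g * h)%g i = cj g^-1%g (d h i) + d g (lo h i).
Proof.
apply: val_inj; rewrite valD cjE /=.
set j := idx (h * t i)%g.
have -> : idx (g * h * t i)%g = idx (g * t j)%g.
  apply/(idx_eqP nA).
  have e : ((g * h * t i)^-1 * (g * t j))%g = ((h * t i)^-1 * t j)%g.
    by rewrite !invMg !mulgA mulgKV.
  by rewrite e; apply: (AinS nA); apply: idxP.
by rewrite /conjg invgK !mulgA !mulgKV.
Qed.

Lemma WM g h : W (g * h)%g = W g + cj g^-1%g (W h).
Proof.
rewrite /W (eq_bigr _ (fun i _ => dM g h i)) big_split /= -raddf_sum addrC.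
by congr (_ + _); rewrite [RHS](reindex_inj (@lo_inj h)).
Qed.

Lemma WV g : W g^-1%g = cj g (- W g).
Proof.
have e := WM g g^-1%g; rewrite mulgV W1 in e.
have e2 : cj g^-1%g (W g^-1%g) = - W g by apply/eqP; rewrite -addr_eq0 addrC -e.
by rewrite -e2 cjKV.
Qed.

Hypothesis tfA : forall (x : T) n, A x -> (0 < n)%N -> (x ^+ n)%g = 1%g -> x = 1%g.
Hypothesis hyp : forall H : T -> Prop, Defs.is_subgroup G H -> Defs.proper G H -> ~ Defs.contranormal G H.
Section Core.
Variable b : AT.
Hypothesis b0 : b != 0.
Hypothesis taub : tau b = 0.

Lemma notC n : (0 < n)%N -> ~ Cc (b *+ n).
Proof.
move=> n0 Cbn; have := tauC Cbn; rewrite tauMn taub mul0rn -mulrnA => /esym e.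
have := congr1 val e; rewrite valMn val0 => /tfA.
have -> : (0 < n * m)%N by rewrite muln_gt0 n0 (m_gt0 nA hl).
move=> /(_ (valA b) isT) vb.
by move/eqP: b0; apply; apply: val_inj.
Qed.

Lemma Cc0 : Cc 0. Proof. by move=> g; rewrite cj0. Qed.
Lemma CcD x y : Cc x -> Cc y -> Cc (x + y). Proof. by move=> hx hy g; rewrite cjD hx hy. Qed.
Lemma CcN x : Cc x -> Cc (- x). Proof. by move=> hx g; rewrite cjN hx. Qed.

Definition p := sval (prime_above m).
Lemma p_prime : prime p. Proof. by rewrite /p; case: prime_above. Qed.
Lemma m_lt_p : (m < p)%N. Proof. by rewrite /p; case: prime_above. Qed.
Lemma p_ndvd_m : ~~ (p %| m)%N.
Proof. by rewrite gtnNdvd // ?m_lt_p // (m_gt0 nA hl). Qed.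
Lemma p_gt1 : (1 < p)%N. Proof. exact: prime_gt1 p_prime. Qed.

Definition Qf (U : AT -> Prop) : Prop :=
  [/\ (forall x y, U x -> U y -> U (x + y)), (forall x, U x -> U (- x)),
      (forall c, Cc c -> U c) & (forall n, ~~ (p %| n)%N -> ~ U (b *+ n))].

Lemma Qf_ext (U1 U2 : AT -> Prop) : (forall x, U1 x <-> U2 x) -> Qf U1 -> Qf U2.
Proof.
move=> e [h1 h2 h3 h4]; split.
- by move=> x y /e hx /e hy; apply/e; apply: h1.
- by move=> x /e hx; apply/e; apply: h2.
- by move=> c hc; apply/e; apply: h3.
- by move=> n hn /e; apply: h4.
Qed.

Definition PZ (V : classical_sets.set AT) : Prop := Qf (fun x => V x \/ Cc x).

Lemma Zorn_ok : exists V, PZ V /\ (forall B, classical_sets.proper V B -> ~ PZ B).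
Proof.
apply: classical_sets.Zorn_bigcup => F sFP tF.
have mem x : (classical_sets.bigcup F id) x <-> exists2 X, F X & X x by [].
have two x y : (exists2 X, F X & X x) -> (exists2 X, F X & X y) -> exists2 X, F X & X x /\ X y.
  move=> [X FX Xx] [Y FY Yy]; have [sXY|sYX] := tF X Y FX FY.
    by exists Y => //; split => //; apply: sXY.
  by exists X => //; split => //; apply: sYX.
split.
- move=> x y [/mem hx|Cx] [/mem hy|Cy].
  + have [X FX [Xx Xy]] := two x y hx hy.
    have [hD _ _ _] := sFP X FX.
    case: (hD x y (or_introl Xx) (or_introl Xy)) => [?|?]; last by right.
    by left; apply/mem; exists X.
  + case: hx => X FX Xx; have [hD _ _ _] := sFP X FX.
    case: (hD x y (or_introl Xx) (or_intror Cy)) => [?|?]; last by right.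
    by left; apply/mem; exists X.
  + case: hy => X FX Xy; have [hD _ _ _] := sFP X FX.
    case: (hD x y (or_intror Cx) (or_introl Xy)) => [?|?]; last by right.
    by left; apply/mem; exists X.
  + by right; apply: CcD.
- move=> x [/mem [X FX Xx]|Cx]; last by right; apply: CcN.
  have [_ hN _ _] := sFP X FX.
  case: (hN x (or_introl Xx)) => [?|?]; last by right.
  by left; apply/mem; exists X.
- by move=> c Cc_c; right.
- move=> n pn [/mem [X FX Xx]|Cx].
    have [_ _ _ hb] := sFP X FX; exact: hb pn (or_introl Xx).
  have n0 : (0 < n)%N by move: pn; case: (n) => //; rewrite dvdn0.
  exact: notC n0 Cx.
Qed.

Definition V0 := projT1 (cid Zorn_ok).
Definition Us (x : AT) : Prop := V0 x \/ Cc x.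
Lemma QUs : Qf Us. Proof. by rewrite /Us /V0; case: cid => V [] /=. Qed.
Lemma UsMax (U' : AT -> Prop) : Qf U' -> (forall x, Us x -> U' x) -> forall x, U' x -> Us x.
Proof.
move=> QU' sUU' x U'x; apply: NNPP => nUx.
have [_ maxV] := projT2 (cid Zorn_ok).
apply: (maxV U').
  split; first by move=> y Vy; apply: sUU'; left.
  by move=> sU'V; apply: nUx; left; apply: sU'V.
apply: Qf_ext QU' => y; split; first by left.
case=> // Cy; apply: sUU'; by right.
Qed.

Lemma UsD x y : Us x -> Us y -> Us (x + y). Proof. by case: QUs => h _ _ _; apply: h. Qed.
Lemma UsN x : Us x -> Us (- x). Proof. by case: QUs => _ h _ _; apply: h. Qed.
Lemma UsC x : Cc x -> Us x. Proof. by case: QUs => _ _ h _; apply: h. Qed.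
Lemma Usb n : ~~ (p %| n)%N -> ~ Us (b *+ n). Proof. by case: QUs => _ _ _ h; apply: h. Qed.
Lemma Us0 : Us 0. Proof. exact: UsC Cc0. Qed.
Lemma UsB x y : Us x -> Us y -> Us (x - y). Proof. by move=> hx hy; apply: UsD => //; apply: UsN. Qed.
Lemma UsMn x n : Us x -> Us (x *+ n).
Proof. by move=> hx; elim: n => [|n IH]; [rewrite mulr0n; apply: Us0|rewrite mulrS; apply: UsD]. Qed.
Lemma Usz x z : Us x -> Us (x *~ z).
Proof.
move=> hx; case: z => n; first by rewrite -pmulrn; apply: UsMn.
by rewrite NegzE mulrNz -pmulrn; apply: UsN; apply: UsMn.
Qed.

Lemma mulrzMn (x : AT) z k : x *~ z *+ k = x *+ k *~ z.
Proof. by rewrite !pmulrn mulrzAC. Qed.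

Lemma M1 y : ~ Us y -> exists n, ~~ (p %| n)%N /\ exists u z, Us u /\ b *+ n = u + y *~ z.
Proof.
move=> nUy; apply: NNPP => hne.
pose U' x := exists u z, Us u /\ x = u + y *~ z.
have QU' : Qf U'.
  split.
  - move=> x1 x2 [u1 [z1 [U1 ->]]] [u2 [z2 [U2 ->]]].
    exists (u1 + u2), (z1 + z2); split; first exact: UsD.
    by rewrite mulrzDr addrACA.
  - move=> x [u [z [Uu ->]]]; exists (- u), (- z); split; first exact: UsN.
    by rewrite mulrNz opprD.
  - move=> c Cc_c; exists c, 0; split; first exact: UsC.
    by rewrite mulr0z addr0.
  - move=> n pn [u [z [Uu e]]]; apply: hne; exists n; split => //.
    by exists u, z.
apply: nUy; apply: (UsMax QU').
  by move=> x Ux; exists x, 0; rewrite mulr0z addr0.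
by exists 0, 1; split; [exact: Us0|rewrite mulr1z add0r].
Qed.

Lemma tors a : exists J, Us (a *+ p ^ J).
Proof.
apply: NNPP => nJ.
have nJ' J : ~ Us (a *+ p ^ J) by move=> h; apply: nJ; exists J.
case: (classic (exists e, (0 < e)%N /\ Us (a *+ e))) => [[e [e0 Ue]]|ne].
  have [e' cpe' ee] := pfactor_coprime p_prime e0.
  have [n [pn [u [z [Uu eb]]]]] := M1 (nJ' (logn p e)).
  apply: (@Usb (n * e')%N).
    by rewrite Euclid_dvdM ?p_prime // negb_or pn -prime_coprime ?p_prime.
  rewrite mulrnA eb mulrnDl; apply: UsD; first exact: UsMn.
  rewrite mulrzMn -mulrnA mulnC -ee; exact: Usz.
have nz z : Us (a *~ z) -> z = 0.
  case: z => k; rewrite ?NegzE ?mulrNz -pmulrn => h.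
    case: k h => // k h; exfalso; apply: ne; exists k.+1; split => //.
  exfalso; apply: ne; exists k.+1; split => //.
  by have := UsN h; rewrite opprK.
have [n0 [pn0 [u0 [z0 [Uu0 e0]]]]] := M1 (nJ' 0).
set j := `|z0|%N.
have [n1 [pn1 [u1 [z1 [Uu1 e1]]]]] := M1 (nJ' j).
have E : a *~ (z0 * n1%:Z - z1 * (p ^ j * n0)%:Z) = u1 *+ n0 - u0 *+ n1.
  have e := mulrnAC b n0 n1; rewrite e0 e1 expn0 mulr1n !mulrnDl in e.
  have L1 : a *~ (z0 * n1%:Z) = a *~ z0 *+ n1 by rewrite mulrzA -pmulrn.
  have L2 : a *~ (z1 * (p ^ j * n0)%:Z) = (a *+ p ^ j) *~ z1 *+ n0.
    by rewrite mulrzA -pmulrn mulrnA [in LHS]mulrzMn.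
  rewrite mulrzBr L1 L2 -(addKr (u0 *+ n1) (a *~ z0 *+ n1)) e.
  by rewrite addrA addrK addrC.
have w0 : z0 * n1%:Z - z1 * (p ^ j * n0)%:Z = 0.
  by apply: nz; rewrite E; apply: UsB; apply: UsMn.
move/eqP: w0; rewrite subr_eq0 => /eqP /(congr1 absz); rewrite !abszM /= => eab.
have dv : (p ^ j %| j * n1)%N by rewrite eab mulnCA dvdn_mulr.
have cp : coprime (p ^ j) n1 by rewrite coprimeXl // prime_coprime ?p_prime.
rewrite Gauss_dvdl // in dv.
have j0 : j = 0%N.
  case: (posnP j) => // jpos; exfalso.
  have := dvdn_leq jpos dv; rewrite leqNgt ltn_expl //; exact: p_gt1.
have z00 : z0 = 0 by apply/eqP; rewrite -absz_eq0 -/j j0.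
by apply: (Usb pn0); rewrite e0 z00 mulr0z addr0.
Qed.

Definition Jf (a : AT) : nat := projT1 (cid (tors a)).
Lemma JfP a : Us (a *+ p ^ Jf a). Proof. by rewrite /Jf; case: cid. Qed.

Definition UG (x : AT) : Prop := forall g : T, Us (cj g x).
Lemma UGD x y : UG x -> UG y -> UG (x + y).
Proof. by move=> hx hy g; rewrite cjD; apply: UsD. Qed.
Lemma UGN x : UG x -> UG (- x).
Proof. by move=> hx g; rewrite cjN; apply: UsN. Qed.
Lemma UGC x : Cc x -> UG x.
Proof. by move=> hx g; rewrite hx; apply: UsC. Qed.
Lemma UG0 : UG 0. Proof. exact: UGC Cc0. Qed.
Lemma UGMn x n : UG x -> UG (x *+ n).
Proof. by move=> hx g; rewrite cjMn; apply: UsMn. Qed.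
Lemma UGcj g x : UG x -> UG (cj g x).
Proof. by move=> hx h; rewrite -cjM. Qed.
Lemma UGb : ~ UG b.
Proof. by move=> h; apply: (@Usb 1%N); [rewrite dvdn1 neq_ltn p_gt1 orbT|rewrite mulr1n; have := h 1%g; rewrite cj1]. Qed.

Definition Jt (a : AT) : nat := \sum_(i < m) Jf (cj (t i) a).
Lemma UGt a : UG (a *+ p ^ Jt a).
Proof.
move=> g; rewrite cjMn cj_idx.
pose k : 'I_m := Ordinal (idx_lt nA hl g).
rewrite /Jt (bigD1 k) //= expnD mulrnA; apply: UsMn; exact: JfP.
Qed.

Lemma bez J : exists x y : nat, (x * m + 1 = y * p ^ J)%N.
Proof.
have cp : coprime (p ^ J) m by rewrite coprimeXl // prime_coprime ?p_prime // p_ndvd_m.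
have pJ : (0 < p ^ J)%N by rewrite expn_gt0 prime_gt0 ?p_prime.
have [x _ dv] := Bezoutl m pJ; rewrite (eqP cp) in dv.
case/dvdnP: dv => y e; exists x, y; by rewrite addnC.
Qed.

Lemma bez_closed (P : AT -> Prop) :
  (forall x y, P x -> P y -> P (x + y)) -> (forall x, P x -> P (- x)) ->
  forall v J, P (v *+ m) -> P (v *+ p ^ J) -> P v.
Proof.
move=> PD PN v J Pm PJ.
have P0 : P 0 by rewrite -(subrr (v *+ m)); apply: PD => //; apply: PN.
have PMn w k : P w -> P (w *+ k).
  by move=> Pw; elim: k => [|k IH]; [rewrite mulr0n|rewrite mulrS; apply: PD].
have [x [y e]] := bez J.
have ev : v = v *+ (y * p ^ J) - v *+ m *+ x.
  by rewrite -e mulrnDr mulr1n -mulrnA [(m * x)%N]mulnC addrAC subrr add0r.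
rewrite ev; apply: PD; last by apply: PN; apply: PMn.
by rewrite [(y * _)%N]mulnC mulrnA; apply: PMn.
Qed.

Lemma UG4 v : UG (v *+ m) -> UG v.
Proof. by move=> h; apply: (bez_closed UGD UGN h (UGt v)). Qed.

Lemma UG5 w : exists v, UG (v *+ m - w).
Proof.
have [x [y e]] := bez (Jt w).
exists (- (w *+ x)).
have E : w *+ (x * m) + w = (w *+ p ^ Jt w) *+ y.
  by rewrite -[X in _ + X]mulr1n -mulrnDr e mulnC mulrnA.
rewrite mulNrn -mulrnA -opprD E; apply: UGN; apply: UGMn; exact: UGt.
Qed.

Definition H (g : T) : Prop := UG (W g).

Lemma Hsub : subgrp H.
Proof.
split; rewrite /H.
- by rewrite W1; exact: UG0.
- by move=> x y hx hy; rewrite WM; apply: UGD => //; apply: UGcj.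
- by move=> x hx; rewrite WV; apply: UGcj; apply: UGN.
Qed.

Lemma H_A a : H (val a) <-> UG a.
Proof. rewrite /H W_A; split; [exact: UG4|exact: UGMn]. Qed.

Lemma H3 g : exists a : AT, H (g * val a)%g.
Proof.
have [v Uv] := UG5 (cj g (- W g)).
exists v; rewrite /H WM W_A.
have -> : v *+ m = (v *+ m - cj g (- W g)) + cj g (- W g) by rewrite subrK.
rewrite cjD cjK addrCA subrr addr0; exact: UGcj.
Qed.

Lemma core : False.
Proof.
apply: (@hyp H).
- exact/subgrpE/Hsub.
- by exists (val b) => /H_A; exact: UGb.
move=> x N /normalpE [[N1 NM NV] NJ] HN.
pose NA (v : AT) := N (val v).
have NAD u v : NA u -> NA v -> NA (u + v) by exact: NM.
have NAN v : NA v -> NA (- v) by exact: NV.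
have UG_NA v : UG v -> NA v by move=> uv; apply: HN; apply/H_A.
have NAc v g : NA (cj g v - v).
  have [a' Ha'] := H3 g; set h := (g * val a')%g.
  have -> : cj g v = cj h v by rewrite /h cjM (cjA _ (valA a')).
  have Nh := HN _ Ha'.
  rewrite /NA valB cjE.
  have -> : (val v ^ h * (val v)^-1)%g = (h^-1 * h ^ (val v)^-1)%g.
    by rewrite /conjg invgK !mulgA.
  by apply: NM; [exact: NV | exact: NJ].
have NAm v : NA (v *+ m).
  rewrite mulm_tau; apply: (NAD).
    by apply: (UG_NA); apply: UGC => g; exact: cj_tau.
  apply: (big_ind NA); [exact: N1 | exact: NAD | ].
  by move=> i _; rewrite -opprB; apply: (NAN); apply: NAc.
have NAall v : NA v by apply: (bez_closed NAD NAN (NAm v) (UG_NA _ (UGt v))).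
have [a' Ha'] := H3 x.
by have := NM _ _ (HN _ Ha') (NV _ (NAall a')); rewrite mulgK.
Qed.

End Core.

Lemma central (a g : T) : A a -> (a ^ g)%g = a.
Proof.
move=> Aa; apply: NNPP => ne.
pose a' := inA Aa.
pose b := cj g a' - a'.
have b0 : b != 0.
  apply/eqP => /eqP; rewrite subr_eq0 => /eqP /(congr1 val).
  by rewrite cjE.
have taub : tau b = 0 by rewrite /b tauBE tau_cj subrr.
exact: (@core b b0 taub).
Qed.

End PartIa.

Theorem lemma2p11 (G : Defs.Group) (A : G -> Prop) :
  Defs.is_normal G A -> Defs.abelian G A -> Defs.torsion_free G A -> Defs.finite_index G A ->
  (forall H : G -> Prop, Defs.is_subgroup G H -> Defs.proper G H -> ~ Defs.contranormal G H) ->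
  Defs.nilpotent G.
Proof.
move=> nA0 abA0 tfA0 [l hl0] hyp.
have nA : normalp (A : GT G -> Prop) by apply/normalpE.
have abA : forall x y : GT G, A x -> A y -> x * y = y * x by exact: abA0.
have tfA : forall (x : GT G) n, A x -> (0 < n)%N -> x ^+ n = 1 -> x = 1.
  by move=> x n Ax /ltP n0; rewrite -gpowE; apply: tfA0.
have hl : forall g : GT G, exists t : GT G, List.In t l /\ A (t^-1 * g) by exact: hl0.
have central := @central G A nA abA l hl tfA hyp.
have [n Ln] := partF nA hl hyp.
exists n.+1 => x /= gx.
change (x = 1 :> GT G); apply: (gx (fun z : GT G => z = 1)).
  apply/subgrpE; split => //.
  - by move=> u v -> ->; rewrite mulg1.
  - by move=> u ->; rewrite invg1.
move=> z [u [v [lu ->]]].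
by rewrite commE commgEl central ?mulVg //; apply: Ln.
Qed.
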